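(* Let $\alpha\in(-1,1)$. For every integer $k\ge0$, $$\Phi_k=\alpha\,\tilde\Phi_{k+1}+\beta_k\,\tilde\Phi_k,\qquad \frac{\partial\Phi_k}{\partial\alpha}=-4\,\tilde\Phi_{k+1}+\gamma_k\,\tilde\Phi_k,$$ where $\beta_k=\dfrac{K_{k,k}}{\tilde K_{k,k}}$ and $\gamma_k=\dfrac{1}{\tilde K_{k,k}}\dfrac{\partial K_{k,k}}{\partial\alpha}$.
   Context: For a parameter $\alpha\in(-1,1)$ define on $[-1,1]$ the weights $\omega(\mu)=(1+\alpha\mu)^{-4}$ and $\tilde\omega(\mu)=(1+\alpha\mu)^{-5}$. Let $\{\phi_k\}_{k\ge0}$ (resp. $\{\tilde\phi_k\}_{k\ge0}$) be the monic orthogonal polynomials on $[-1,1]$ with respect to $\omega$ (resp. $\tilde\omega$): $\phi_k$ is monic of degree $k$ and $\int_{-1}^1\phi_j\phi_k\,\omega\,d\mu=0$ for $j\neq k$ (similarly for $\tilde\phi_k$ with $\tilde\omega$); their coefficients depend smoothly on $\alpha$. Set $\Phi_k=\omega\phi_k$, $\tilde\Phi_k=\tilde\omega\tilde\phi_k$, $K_{j,k}=\int_{-1}^1\mu^j\phi_k\,\omega\,d\mu$ and $\tilde K_{j,k}=\int_{-1}^1\mu^j\tilde\phi_k\,\tilde\omega\,d\mu$ (so $K_{k,k}=\int_{-1}^1\phi_k^2\omega\,d\mu>0$ and $\tilde K_{k,k}>0$). *)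

(* Defs.v *)
From Stdlib Require Import Reals ClassicalEpsilon.
Open Scope R_scope.

(* The Riemann integral of f over [a,b] as a real number: the value
   RiemannInt pr for some integrability proof pr (chosen by epsilon;
   all proofs give the same value). *)
Definition RInt (f : R -> R) (a b : R) : R :=
  epsilon (inhabits 0)
    (fun v => exists pr : Riemann_integrable f a b, RiemannInt pr = v).

Definition omega (alpha mu : R) : R := / (1 + alpha * mu) ^ 4.
Definition omegat (alpha mu : R) : R := / (1 + alpha * mu) ^ 5.

(* A family of polynomials given by coefficients:
   c k j alpha = coefficient of mu^j in the degree-k polynomial phi_k
   (depending on alpha); phi_k(mu) = sum_{j=0}^k c k j alpha mu^j. *)
Definition poly_of (c : nat -> nat -> R -> R) (k : nat) (alpha mu : R) : R :=
  sum_f_R0 (fun j => c k j alpha * mu ^ j) k.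

Definition monic_orthogonal (w : R -> R -> R) (c : nat -> nat -> R -> R)
    (alpha : R) : Prop :=
  (forall k, c k k alpha = 1) /\
  (forall j k, j <> k ->
     RInt (fun mu => poly_of c j alpha mu * poly_of c k alpha mu * w alpha mu)
       (-1) 1 = 0).

Definition Phi_of (w : R -> R -> R) (c : nat -> nat -> R -> R) (k : nat)
    (alpha mu : R) : R :=
  w alpha mu * poly_of c k alpha mu.

Definition K_of (w : R -> R -> R) (c : nat -> nat -> R -> R) (j k : nat)
    (alpha : R) : R :=
  RInt (fun mu => mu ^ j * poly_of c k alpha mu * w alpha mu) (-1) 1.

(* Main.v *)
Require Import Defs.
From Stdlib Require Import Reals Lra Lia ClassicalEpsilon.
From Coquelicot Require Import Coquelicot.
Open Scope R_scope.

Definition CI (f : R -> R) : R := Coquelicot.RInt.RInt f (-1) 1.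
Definition cont (f : R -> R) := forall x, -1 <= x <= 1 -> continuous f x.

Lemma cont_mult f g : cont f -> cont g -> cont (fun x => f x * g x).
Proof. intros Hf Hg x Hx. apply (continuous_mult f g x); auto. Qed.
Lemma cont_plus f g : cont f -> cont g -> cont (fun x => f x + g x).
Proof. intros Hf Hg x Hx. apply (continuous_plus f g x); auto. Qed.
Lemma cont_const c : cont (fun _ => c).
Proof. intros x Hx. apply continuous_const. Qed.
Lemma cont_id : cont (fun x => x).
Proof. intros x Hx. apply continuous_id. Qed.
Lemma cont_ext f g : (forall x, f x = g x) -> cont f -> cont g.
Proof. intros E Hf x Hx. apply (continuous_ext f g); auto. Qed.
Lemma cont_pow n : cont (fun x => x ^ n).
Proof. induction n; simpl. apply cont_const. apply cont_mult; auto using cont_id. Qed.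

Lemma cont_ex f : cont f -> ex_RInt f (-1) 1.
Proof.
  intros Hf. apply (@ex_RInt_continuous R_CompleteNormedModule). intros z Hz. apply Hf.
  rewrite Rmin_left in Hz by lra. rewrite Rmax_right in Hz by lra. exact Hz.
Qed.

Lemma RInt_eq f : cont f -> Defs.RInt f (-1) 1 = CI f.
Proof.
  intros Hf. unfold Defs.RInt.
  destruct (epsilon_spec (inhabits 0)
    (fun v => exists pr : Riemann_integrable f (-1) 1, RiemannInt pr = v)) as [pr Hpr].
  - exists (RiemannInt (ex_RInt_Reals_0 _ _ _ (cont_ex f Hf))). eauto.
  - rewrite <- Hpr. unfold CI. rewrite (RInt_Reals f (-1) 1 pr). reflexivity.
Qed.

Lemma CI_plus f g : cont f -> cont g -> CI (fun x => f x + g x) = CI f + CI g.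
Proof. intros. unfold CI. apply (RInt_plus f g); apply cont_ex; auto. Qed.
Lemma CI_scal a f : cont f -> CI (fun x => a * f x) = a * CI f.
Proof. intros. unfold CI. apply (RInt_scal f); apply cont_ex; auto. Qed.
Lemma CI_ext f g : (forall x, -1 <= x <= 1 -> f x = g x) -> CI f = CI g.
Proof.
  intros E. unfold CI. apply RInt_ext. intros x Hx.
  rewrite Rmin_left in Hx by lra. rewrite Rmax_right in Hx by lra. apply E; lra.
Qed.
Lemma CI_zero : CI (fun _ => 0) = 0.
Proof.
  unfold CI. rewrite RInt_const. unfold scal; simpl. unfold mult; simpl. lra.
Qed.
Fixpoint isp (n : nat) (f : R -> R) : Prop :=
  match n with
  | O => forall x, f x = 0
  | S m => exists a g, isp m g /\ forall x, f x = a + x * g x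
  end.

Lemma isp_ext n f g : (forall x, f x = g x) -> isp n f -> isp n g.
Proof.
  destruct n; simpl; intros E H.
  - intros x; rewrite <- E; auto.
  - destruct H as [a [h [H1 H2]]]. exists a, h. split; auto. intros; rewrite <- E; auto.
Qed.

Lemma isp_cont n f : isp n f -> cont f.
Proof.
  revert f; induction n; simpl; intros f H.
  - apply (cont_ext (fun _ => 0)); [intros; rewrite H; auto| apply cont_const].
  - destruct H as [a [g [H1 H2]]].
    apply (cont_ext (fun x => a + x * g x)); [intros; rewrite H2; auto|].
    apply cont_plus; [apply cont_const|apply cont_mult; auto using cont_id].
Qed.

Lemma isp_zero n : isp n (fun _ => 0).
Proof.
  induction n; simpl; auto. exists 0, (fun _ => 0). split; auto. intros; ring.
Qed.

Lemma isp_S n f : isp n f -> isp (S n) f.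
Proof.
  revert f; induction n; intros f H.
  - simpl in *. exists 0, (fun _ => 0). split; auto. intros; rewrite H; ring.
  - destruct H as [a [g [H1 H2]]]. exists a, g. split; auto.
Qed.

Lemma isp_le n m f : (n <= m)%nat -> isp n f -> isp m f.
Proof. intros Hle; induction Hle; auto using isp_S. Qed.

Lemma isp_plus n f g : isp n f -> isp n g -> isp n (fun x => f x + g x).
Proof.
  revert f g; induction n; simpl; intros f g Hf Hg.
  - intros x; rewrite Hf, Hg; ring.
  - destruct Hf as [a [f' [Hf1 Hf2]]]. destruct Hg as [b [g' [Hg1 Hg2]]].
    exists (a + b), (fun x => f' x + g' x). split; auto. intros; rewrite Hf2, Hg2; ring.
Qed.

Lemma isp_scal n c f : isp n f -> isp n (fun x => c * f x).
Proof.
  revert f; induction n; simpl; intros f Hf.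
  - intros x; rewrite Hf; ring.
  - destruct Hf as [a [f' [Hf1 Hf2]]].
    exists (c * a), (fun x => c * f' x). split; auto. intros; rewrite Hf2; ring.
Qed.

Lemma isp_mulx n f : isp n f -> isp (S n) (fun x => x * f x).
Proof. intros H. exists 0, f. split; auto. intros; ring. Qed.

Lemma isp_pow n : isp (S n) (fun x => x ^ n).
Proof.
  induction n.
  - exists 1, (fun _ => 0). split; [apply isp_zero|]. intros; simpl; ring.
  - apply (isp_ext _ (fun x => x * x ^ n)); [intros; simpl; ring|]. apply isp_mulx; auto.
Qed.

Lemma isp_sum (q : nat -> R) n : isp (S n) (fun x => sum_f_R0 (fun j => q j * x ^ j) n).
Proof.
  induction n.
  - apply (isp_ext _ (fun x => q 0%nat * x ^ 0)); [intros; simpl; ring|].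
    apply (isp_scal 1 (q 0%nat)), (isp_pow 0).
  - apply (isp_ext _ (fun x => sum_f_R0 (fun j => q j * x ^ j) n + q (S n) * x ^ (S n))); [intros; simpl; ring|].
    apply isp_plus. apply isp_S; auto. apply (isp_scal (S (S n))), isp_pow.
Qed.

Lemma poly_isp c k a : isp (S k) (poly_of c k a).
Proof. unfold poly_of. apply isp_sum. Qed.

Lemma poly_dec c k a : c k k a = 1 ->
  exists L, isp k L /\ forall x, poly_of c k a x = x ^ k + L x.
Proof.
  intros H. destruct k.
  - exists (fun _ => 0). split; [apply isp_zero|]. intros; unfold poly_of; simpl; rewrite H; ring.
  - exists (fun x => sum_f_R0 (fun j => c (S k) j a * x ^ j) k). split; [apply isp_sum|].
    intros; unfold poly_of; rewrite tech5, H. ring.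
Qed.
Ltac solve_cont := repeat
  match goal with
  | H : cont ?f |- cont ?f => exact H
  | |- cont (fun x => @?f x * @?g x) => apply (cont_mult f g)
  | |- cont (fun x => @?f x + @?g x) => apply (cont_plus f g)
  | |- cont (fun x => x ^ _) => apply cont_pow
  | |- cont (fun x => x) => apply cont_id
  | |- cont (fun _ => _) => apply cont_const
  | |- cont (poly_of _ _ _) => eapply isp_cont; apply poly_isp
  | H : isp _ ?f |- cont ?f => eapply isp_cont; exact H
  | |- cont (fun x => ?f x) => change (cont f)
  end.

Lemma G_aux (P w : R -> R) m : cont P -> cont w ->
  (forall i, (i < m)%nat -> CI (fun x => x ^ i * P x * w x) = 0) ->
  forall n f i, isp n f -> (n + i <= m)%nat ->
  CI (fun x => x ^ i * f x * P x * w x) = 0.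
Proof.
  intros HP Hw Horth n. induction n; intros f i Hf Hle.
  - simpl in Hf. rewrite <- CI_zero. apply CI_ext. intros; rewrite Hf; ring.
  - destruct Hf as [a [g [Hg Hfe]]].
    rewrite (CI_ext _ (fun x => a * (x ^ i * P x * w x) + x ^ (S i) * g x * P x * w x)).
    2:{ intros; rewrite Hfe; simpl; ring. }
    rewrite CI_plus by solve_cont. rewrite CI_scal by solve_cont.
    rewrite Horth by lia. rewrite IHn; [ring | auto | lia].
Qed.

Lemma G_orth (P w : R -> R) m : cont P -> cont w ->
  (forall i, (i < m)%nat -> CI (fun x => x ^ i * P x * w x) = 0) ->
  forall n f, isp n f -> (n <= m)%nat ->
  CI (fun x => f x * P x * w x) = 0.
Proof.
  intros HP Hw Horth n f Hf Hle.
  rewrite <- (G_aux P w m HP Hw Horth n f 0 Hf) by lia.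
  apply CI_ext; intros; simpl; ring.
Qed.
Lemma lemA (w : R -> R -> R) c a : cont (w a) -> monic_orthogonal w c a ->
  forall k i, (i < k)%nat -> CI (fun x => x ^ i * poly_of c k a x * w a x) = 0.
Proof.
  intros Hw [Hmon Horth] k.
  assert (H : forall N i, (i < N)%nat -> (i < k)%nat ->
     CI (fun x => x ^ i * poly_of c k a x * w a x) = 0).
  { induction N; intros i HiN Hik; [lia|].
    destruct (poly_dec c i a (Hmon i)) as [L [HL HLe]].
    rewrite (CI_ext _ (fun x => poly_of c i a x * poly_of c k a x * w a x
                               + (-1) * (L x * poly_of c k a x * w a x))).
    2:{ intros; rewrite HLe; ring. }
    assert (Hc : forall j, cont (poly_of c j a)) by (intros; eapply isp_cont; apply poly_isp).
    rewrite CI_plus by solve_cont. rewrite CI_scal by solve_cont.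
    rewrite <- RInt_eq by solve_cont. rewrite Horth by lia.
    assert (Ho : forall i', (i' < i)%nat -> CI (fun x => x ^ i' * poly_of c k a x * w a x) = 0)
      by (intros i' Hi'; apply IHN; lia).
    rewrite (G_orth (poly_of c k a) (w a) i (Hc k) Hw Ho i L HL) by lia. ring. }
  intros i Hi. apply (H (S i)); lia.
Qed.
Lemma sub_ex f a b : -1 <= a -> a <= b -> b <= 1 -> cont f -> ex_RInt f a b.
Proof.
  intros H1 H2 H3 Hf. apply (@ex_RInt_continuous R_CompleteNormedModule). intros z Hz.
  rewrite Rmin_left in Hz by lra. rewrite Rmax_right in Hz by lra. apply Hf; lra.
Qed.

Lemma pos0 (f : R -> R) : cont f -> (forall x, -1 <= x <= 1 -> 0 <= f x) -> CI f = 0 ->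
  forall x, -1 <= x <= 1 -> f x = 0.
Proof.
  intros Hf Hnn HI x0 Hx0.
  destruct (Rle_lt_or_eq_dec 0 (f x0) (Hnn x0 Hx0)) as [Hp|]; [|auto].
  exfalso.
  assert (Hc := Hf x0 Hx0).
  assert (Hl : locally x0 (fun y => ball (f x0) (mkposreal _ Hp) (f y))).
  { apply Hc. apply locally_ball. }
  destruct Hl as [d Hd].
  assert (Hpos : forall y, Rabs (y - x0) < d -> 0 < f y).
  { intros y Hy. assert (B := Hd y Hy). unfold ball in B; simpl in B.
    unfold AbsRing_ball, abs, minus, plus, opp in B; simpl in B.
    apply Rabs_def2 in B. simpl in B. lra. }
  set (a := Rmax (-1) (x0 - d / 2)). set (b := Rmin 1 (x0 + d / 2)).
  assert (Hd0 := cond_pos d).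
  assert (Ha1 : -1 <= a) by apply Rmax_l.
  assert (Hb1 : b <= 1) by apply Rmin_l.
  assert (Hab : a < b).
  { unfold a, b. apply Rmax_case; apply Rmin_case; lra. }
  assert (Hax : x0 - d / 2 <= a) by apply Rmax_r.
  assert (Hbx : b <= x0 + d / 2) by apply Rmin_r.
  assert (E1 : ex_RInt f (-1) a) by (apply sub_ex; lra || auto).
  assert (E2 : ex_RInt f a b) by (apply sub_ex; lra || auto).
  assert (E3 : ex_RInt f b 1) by (apply sub_ex; lra || auto).
  assert (I1 : 0 <= RInt f (-1) a).
  { apply RInt_ge_0; [lra|exact E1|intros; apply Hnn; lra]. }
  assert (I3 : 0 <= RInt f b 1).
  { apply RInt_ge_0; [lra|exact E3|intros; apply Hnn; lra]. }
  assert (I2 : 0 < RInt f a b).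
  { apply RInt_gt_0; [lra| |].
    intros y Hy. apply Hpos. apply Rabs_def1; lra.
    intros y Hy; apply Hf; lra. }
  unfold CI in HI.
  rewrite <- (RInt_Chasles f (-1) a 1) in HI; auto.
  rewrite <- (RInt_Chasles f a b 1) in HI; auto.
  unfold plus in HI; simpl in HI. lra.
  apply (ex_RInt_Chasles f a b 1); auto.
Qed.
Lemma cont0 (h : R -> R) : continuous h 0 -> (forall y, 0 < y < 1 -> h y = 0) -> h 0 = 0.
Proof.
  intros Hc Hz. destruct (Req_dec (h 0) 0) as [|Hn]; auto. exfalso.
  assert (Hp : 0 < Rabs (h 0)) by (apply Rabs_pos_lt; auto).
  assert (Hl : locally 0 (fun y => ball (h 0) (mkposreal _ Hp) (h y))).
  { apply Hc. apply locally_ball. }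
  destruct Hl as [d Hd]. assert (Hd0 := cond_pos d).
  set (y := Rmin (d / 2) (1 / 2)).
  assert (Hy1 : 0 < y) by (unfold y; apply Rmin_case; lra).
  assert (Hy2 : y <= 1/2) by apply Rmin_r.
  assert (Hy3 : y <= d/2) by apply Rmin_l.
  assert (B : ball 0 d y).
  { unfold ball; simpl. unfold AbsRing_ball, abs, minus, plus, opp; simpl.
    rewrite Rabs_right; lra. }
  specialize (Hd y B). unfold ball in Hd; simpl in Hd.
  unfold AbsRing_ball, abs, minus, plus, opp in Hd; simpl in Hd.
  rewrite Hz in Hd by lra. rewrite Rplus_0_l, Rabs_Ropp in Hd. lra.
Qed.

Lemma lemZ n f : isp n f -> (forall x, -1 < x < 1 -> x ^ n + f x = 0) -> False.
Proof.
  revert f; induction n; intros f Hf H.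
  - simpl in Hf. specialize (H 0). rewrite Hf in H. simpl in H. lra.
  - destruct Hf as [a [g [Hg He]]].
    assert (Ha : a = 0).
    { specialize (H 0 ltac:(lra)). rewrite He in H. simpl in H. lra. }
    apply (IHn g Hg). intros x Hx.
    assert (Hnz : forall y, -1 < y < 1 -> y <> 0 -> y ^ n + g y = 0).
    { intros y Hy Hy0. specialize (H y Hy). rewrite He, Ha in H.
      apply (Rmult_eq_reg_l y); auto. simpl in H. lra. }
    destruct (Req_dec x 0) as [->|Hx0]; [|auto].
    apply (cont0 (fun y => y ^ n + g y)).
    + assert (C : cont (fun y => y ^ n + g y)) by solve_cont. apply C; lra.
    + intros y Hy. apply Hnz; lra.
Qed.
Lemma onepos a x : -1 < a < 1 -> -1 <= x <= 1 -> 0 < 1 + a * x.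
Proof. intros Ha Hx.
 assert (0 <= (1 + a) * (1 + x)) by (apply Rmult_le_pos; lra).
 destruct (Rlt_le_dec x 1).
 - assert (0 < (1 - a) * (1 - x)) by (apply Rmult_lt_0_compat; lra). nra.
 - replace x with 1 by lra. lra. Qed.

Lemma cont_powf f n : cont f -> cont (fun x => f x ^ n).
Proof. intros Hf; induction n; simpl. apply cont_const. apply cont_mult; auto. Qed.

Lemma cont_wn a n : -1 < a < 1 -> cont (fun x => / (1 + a * x) ^ n).
Proof.
  intros Ha x Hx. apply (continuous_Rinv_comp (fun x => (1 + a * x) ^ n)).
  - apply cont_powf. apply cont_plus. apply cont_const. apply cont_mult. apply cont_const. apply cont_id. lra.
  - apply pow_nonzero. apply Rgt_not_eq, onepos; auto.
Qed.

Lemma cont_om a : -1 < a < 1 -> cont (omega a).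
Proof. intros; apply cont_wn; auto. Qed.
Lemma cont_omt a : -1 < a < 1 -> cont (omegat a).
Proof. intros; apply cont_wn; auto. Qed.

Lemma om_omt a x : -1 < a < 1 -> -1 <= x <= 1 -> omega a x = (1 + a * x) * omegat a x.
Proof.
  intros Ha Hx. assert (H := onepos a x Ha Hx). unfold omega, omegat. field. lra.
Qed.
Lemma omt_pos a x : -1 < a < 1 -> -1 <= x <= 1 -> 0 < omegat a x.
Proof.
  intros Ha Hx. assert (H := onepos a x Ha Hx). unfold omegat. apply Rinv_0_lt_compat.
  apply pow_lt; auto.
Qed.

Lemma Kt_ne0 ct a k : -1 < a < 1 -> monic_orthogonal omegat ct a ->
  CI (fun x => x ^ k * poly_of ct k a x * omegat a x) <> 0.
Proof.
  intros Ha Hm E. assert (Hw := cont_omt a Ha).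
  destruct (poly_dec ct k a (proj1 Hm k)) as [L [HL HLe]].
  assert (Z : CI (fun x => poly_of ct k a x * poly_of ct k a x * omegat a x) = 0).
  { rewrite (CI_ext _ (fun x => x ^ k * poly_of ct k a x * omegat a x
                               + L x * poly_of ct k a x * omegat a x)).
    2:{ intros; rewrite HLe at 1; ring. }
    rewrite CI_plus by solve_cont. rewrite E.
    rewrite (G_orth (poly_of ct k a) (omegat a) k) with (n := k); auto; try ring; try solve_cont.
    intros; apply lemA; auto. }
  apply (lemZ k L HL). intros x Hx. rewrite <- HLe.
  assert (P0 := pos0 (fun x => poly_of ct k a x * poly_of ct k a x * omegat a x) ltac:(solve_cont)
     ltac:(intros y Hy; assert (Hp := omt_pos a y Ha Hy); simpl; apply Rmult_le_pos; [apply Rle_0_sqr|lra]) Z x ltac:(lra)).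
  simpl in P0.
  assert (Hp := omt_pos a x Ha ltac:(lra)).
  destruct (Rmult_integral _ _ P0) as [H0|H0]; [|lra].
  destruct (Rmult_integral _ _ H0); auto.
Qed.
Lemma expand ct a k : -1 < a < 1 -> monic_orthogonal omegat ct a ->
  forall F l v,
  isp (S k) (fun x => F x - l * poly_of ct (S k) a x) ->
  (forall i, (i < k)%nat -> CI (fun x => x ^ i * F x * omegat a x) = 0) ->
  CI (fun x => x ^ k * F x * omegat a x) = v ->
  forall mu, -1 <= mu <= 1 ->
  F mu = l * poly_of ct (S k) a mu
       + (v / CI (fun x => x ^ k * poly_of ct k a x * omegat a x)) * poly_of ct k a mu.
Proof.
  intros Ha Hm F l v HF Ho Hv mu Hmu.
  assert (Hw := cont_omt a Ha).
  assert (Kne := Kt_ne0 ct a k Ha Hm).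
  set (Kt := CI (fun x => x ^ k * poly_of ct k a x * omegat a x)) in *.
  set (b := v / Kt).
  assert (HFc : cont F).
  { apply (cont_ext (fun x => (F x - l * poly_of ct (S k) a x) + l * poly_of ct (S k) a x)).
    intros; ring. solve_cont. }
  set (Q := fun x => F x - l * poly_of ct (S k) a x - b * poly_of ct k a x).
  assert (HQ : isp (S k) Q).
  { apply (isp_ext _ (fun x => (F x - l * poly_of ct (S k) a x) + (- b) * poly_of ct k a x)).
    intros; unfold Q; ring. apply isp_plus; auto. apply isp_scal, poly_isp. }
  assert (HQc : cont Q) by (eapply isp_cont; eauto).
  assert (HQo : forall i, (i < S k)%nat -> CI (fun x => x ^ i * Q x * omegat a x) = 0).
  { intros i Hi.
    rewrite (CI_ext _ (fun x => (x ^ i * F x * omegat a x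
         + (- l) * (x ^ i * poly_of ct (S k) a x * omegat a x))
         + (- b) * (x ^ i * poly_of ct k a x * omegat a x))).
    2:{ intros; unfold Q; ring. }
    rewrite CI_plus by solve_cont. rewrite CI_plus by solve_cont.
    rewrite !CI_scal by solve_cont.
    rewrite (lemA omegat ct a Hw Hm (S k) i Hi).
    destruct (Nat.eq_dec i k) as [->|Hne].
    - rewrite Hv. fold Kt. unfold b. field. auto.
    - rewrite Ho by lia. rewrite (lemA omegat ct a Hw Hm k i) by lia. ring. }
  assert (Z := G_orth Q (omegat a) (S k) HQc Hw HQo (S k) Q HQ (le_n _)).
  assert (P0 := pos0 (fun x => Q x * Q x * omegat a x) ltac:(solve_cont)
     ltac:(intros y Hy; assert (Hp := omt_pos a y Ha Hy); simpl; apply Rmult_le_pos; [apply Rle_0_sqr|lra]) Z mu Hmu).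
  simpl in P0.
  assert (Hp := omt_pos a mu Ha Hmu).
  destruct (Rmult_integral _ _ P0) as [H0|H0]; [|lra].
  assert (Q mu = 0) by (destruct (Rmult_integral _ _ H0); auto).
  unfold Q in H. lra.
Qed.
Lemma der_om u v : 1 + u * v <> 0 ->
  is_derive (fun z => omega z v) u (-4 * v * omegat u v).
Proof.
  intros H. unfold omega, omegat. auto_derive.
  - intros E. apply H. repeat (apply Rmult_integral in E; destruct E as [E|E]); auto; lra.
  - field. auto.
Qed.
Lemma der_f m u v : 1 + u * v <> 0 ->
  is_derive (fun z => v ^ m * omega z v) u (v ^ m * (-4 * v * omegat u v)).
Proof.
  intros H. apply (is_derive_ext (fun z => scal (v ^ m) (omega z v))).
  { intros; reflexivity. }
  apply (is_derive_scal (fun z => omega z v) u (v ^ m)). apply der_om; auto.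
Qed.

Lemma c2d_pow f n x y : continuity_2d_pt f x y -> continuity_2d_pt (fun u v => f u v ^ n) x y.
Proof.
  intros H; induction n; simpl.
  - apply continuity_2d_pt_const.
  - apply (continuity_2d_pt_mult f (fun u v => f u v ^ n)); auto.
Qed.

Lemma loc_int a : -1 < a < 1 -> locally a (fun y => -1 < y < 1).
Proof.
  intros Ha. assert (Hp : 0 < Rmin (a + 1) (1 - a)) by (apply Rmin_case; lra).
  exists (mkposreal _ Hp). intros y Hy. unfold ball in Hy; simpl in Hy.
  unfold AbsRing_ball, abs, minus, plus, opp in Hy; simpl in Hy.
  apply Rabs_def2 in Hy. revert Hy. apply Rmin_case_strong; intros; lra.
Qed.

Lemma is_derive_eqv (f : R -> R) x (l1 l2 : R) : l1 = l2 -> is_derive f x l1 -> is_derive f x l2.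
Proof. intros ->; auto. Qed.

Definition M (m : nat) (a : R) := CI (fun x => x ^ m * omega a x).

Lemma M_der m a : -1 < a < 1 ->
  is_derive (M m) a (-4 * CI (fun x => x ^ (S m) * omegat a x)).
Proof.
  intros Ha.
  assert (Rm : Rmin (-1) 1 = -1) by (apply Rmin_left; lra).
  assert (RM : Rmax (-1) 1 = 1) by (apply Rmax_right; lra).
  assert (D := is_derive_RInt_param (fun u t => t ^ m * omega u t) (-1) 1 a).
  assert (Hval : RInt (fun t => Derive (fun u => t ^ m * omega u t) a) (-1) 1
                 = -4 * CI (fun x => x ^ (S m) * omegat a x)).
  { rewrite <- (CI_scal (-4)) by (apply cont_mult; [apply cont_pow|apply cont_omt; auto]).
    apply CI_ext. intros t Ht.
    assert (E := is_derive_unique _ _ _ (der_f m a t ltac:(apply Rgt_not_eq, onepos; auto))).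
    etransitivity; [apply E|]. simpl; ring. }
  apply (is_derive_eqv _ _ _ _ Hval). apply D.
  - apply (filter_imp (fun y => -1 < y < 1)); [|apply loc_int; auto].
    intros y Hy t Ht. rewrite Rm, RM in Ht. eexists. apply der_f.
    apply Rgt_not_eq, onepos; auto; lra.
  - intros t Ht. rewrite Rm, RM in Ht.
    assert (Hne : continuity_2d_pt (fun u v => 1 + u * v) a t).
    { apply (continuity_2d_pt_plus (fun _ _ => 1) (fun u v => u * v)).
      apply continuity_2d_pt_const.
      apply (continuity_2d_pt_mult (fun u _ => u) (fun _ v => v)).
      apply continuity_2d_pt_id1. apply continuity_2d_pt_id2. }
    assert (L := continuity_2d_pt_neq_0 _ _ _ Hne ltac:(apply Rgt_not_eq, onepos; auto)).
    apply (continuity_2d_pt_ext_loc (fun u v => v ^ m * (-4 * v * / (1 + u * v) ^ 5))).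
    + apply (locally_2d_impl (fun u v => 1 + u * v <> 0)); auto.
      apply locally_2d_forall. intros u v Huv.
      assert (E := is_derive_unique _ _ _ (der_f m u v Huv)).
      symmetry. etransitivity; [apply E|]. unfold omegat. reflexivity.
    + apply (continuity_2d_pt_mult (fun _ v => v ^ m) (fun u v => -4 * v * / (1 + u * v) ^ 5)).
      apply (c2d_pow (fun _ v => v)). apply continuity_2d_pt_id2.
      apply (continuity_2d_pt_mult (fun _ v => -4 * v) (fun u v => / (1 + u * v) ^ 5)).
      apply (continuity_2d_pt_mult (fun _ _ => -4) (fun _ v => v)).
      apply continuity_2d_pt_const. apply continuity_2d_pt_id2.
      apply (continuity_2d_pt_inv (fun u v => (1 + u * v) ^ 5)).
      apply (c2d_pow (fun u v => 1 + u * v)); auto.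
      apply pow_nonzero, Rgt_not_eq, onepos; auto.
  - apply (filter_imp (fun y => -1 < y < 1)); [|apply loc_int; auto].
    intros y Hy. apply cont_ex. apply cont_mult. apply cont_pow. apply cont_om; lra.
Qed.
Lemma CI_polysum w i (q : nat -> R) n : cont w ->
  CI (fun x => x ^ i * sum_f_R0 (fun j => q j * x ^ j) n * w x)
  = sum_f_R0 (fun j => q j * CI (fun x => x ^ (i + j) * w x)) n.
Proof.
  intros Hw. induction n.
  - simpl. rewrite <- CI_scal by solve_cont. apply CI_ext; intros.
    rewrite Nat.add_0_r. simpl. ring.
  - rewrite tech5, <- IHn. rewrite <- CI_scal by solve_cont.
    rewrite <- CI_plus.
    + apply CI_ext; intros. rewrite tech5, pow_add. ring.
    + apply (cont_mult _ w); auto. apply cont_mult. apply cont_pow.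
      eapply isp_cont; apply isp_sum.
    + solve_cont.
Qed.

Lemma is_derive_sum (g : nat -> R -> R) (g' : nat -> R) x n :
  (forall j, is_derive (g j) x (g' j)) ->
  is_derive (fun a => sum_f_R0 (fun j => g j a) n) x (sum_f_R0 g' n).
Proof.
  intros H. induction n; simpl.
  - apply H.
  - apply (is_derive_plus (fun a => sum_f_R0 (fun j => g j a) n) (g (S n))); auto.
Qed.

Lemma K_expand c k i a : -1 < a < 1 ->
  K_of omega c i k a = sum_f_R0 (fun j => c k j a * M (i + j) a) k.
Proof.
  intros Ha. unfold K_of. rewrite RInt_eq.
  - unfold poly_of. rewrite CI_polysum by (apply cont_om; auto). reflexivity.
  - assert (Hw := cont_om a Ha). solve_cont.
Qed.

Lemma K_der (c : nat -> nat -> R -> R) k i a : -1 < a < 1 -> (forall j, ex_derive (c k j) a) ->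
  is_derive (fun b => K_of omega c i k b) a
    (sum_f_R0 (fun j => Derive (c k j) a * M (i + j) a
                      + c k j a * (-4 * CI (fun x => x ^ (S (i + j)) * omegat a x))) k).
Proof.
  intros Ha Hd.
  apply (is_derive_ext_loc (fun b => sum_f_R0 (fun j => c k j b * M (i + j) b) k)).
  { apply (filter_imp (fun y => -1 < y < 1)); [|apply loc_int; auto].
    intros y Hy. rewrite K_expand; auto. }
  apply (is_derive_sum (fun j b => c k j b * M (i + j) b)).
  intros j. eapply is_derive_eqv; [|apply (is_derive_mult (c k j) (M (i + j)))].
  - simpl. reflexivity.
  - apply Derive_correct; auto.
  - apply M_der; auto.
  - intros; apply Rmult_comm.
Qed.

Lemma Phi_der (c : nat -> nat -> R -> R) k a mu : 1 + a * mu <> 0 -> (forall j, ex_derive (c k j) a) ->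
  is_derive (fun b => Phi_of omega c k b mu) a
    (-4 * mu * omegat a mu * poly_of c k a mu
     + omega a mu * sum_f_R0 (fun j => Derive (c k j) a * mu ^ j) k).
Proof.
  intros Hne Hd. unfold Phi_of.
  eapply is_derive_eqv; [|apply (is_derive_mult (fun b => omega b mu) (fun b => poly_of c k b mu))].
  - simpl. reflexivity.
  - apply der_om; auto.
  - unfold poly_of. apply (is_derive_sum (fun j b => c k j b * mu ^ j)).
    intros j. eapply is_derive_eqv; [|apply (is_derive_mult (c k j) (fun _ => mu ^ j))];
      [ | apply Derive_correct; auto | apply is_derive_const | intros; apply Rmult_comm].
    simpl. unfold plus, mult, zero; simpl. ring.
  - intros; apply Rmult_comm.
Qed.
Lemma D_isp (d : nat -> R) k : d k = 0 -> isp k (fun x => sum_f_R0 (fun j => d j * x ^ j) k).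
Proof.
  intros H. destruct k.
  - simpl. intros; rewrite H; ring.
  - apply (isp_ext _ (fun x => sum_f_R0 (fun j => d j * x ^ j) k)).
    + intros; rewrite tech5, H; ring.
    + apply isp_sum.
Qed.

Theorem lemma2
  (c ct : nat -> nat -> R -> R)
  (Hc : forall a, -1 < a < 1 -> monic_orthogonal omega c a)
  (Hct : forall a, -1 < a < 1 -> monic_orthogonal omegat ct a)
  (Hsc : forall k j a, -1 < a < 1 -> derivable_pt (c k j) a)
  (Hsct : forall k j a, -1 < a < 1 -> derivable_pt (ct k j) a) :
  forall (alpha : R), -1 < alpha < 1 ->
  forall (k : nat) (mu : R), -1 <= mu <= 1 ->
    Phi_of omega c k alpha mu
      = alpha * Phi_of omegat ct (S k) alpha mu
        + (K_of omega c k k alpha / K_of omegat ct k k alpha)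
          * Phi_of omegat ct k alpha mu
    /\
    exists dK : R,
      derivable_pt_lim (fun a => K_of omega c k k a) alpha dK /\
      derivable_pt_lim (fun a => Phi_of omega c k a mu) alpha
        (-4 * Phi_of omegat ct (S k) alpha mu
         + (dK / K_of omegat ct k k alpha) * Phi_of omegat ct k alpha mu).
Proof.
  intros alpha Ha k mu Hmu.
  assert (HcA := Hc alpha Ha). assert (HctA := Hct alpha Ha).
  assert (Hw4 := cont_om alpha Ha). assert (Hw5 := cont_omt alpha Ha).
  assert (KtE : K_of omegat ct k k alpha = CI (fun x => x ^ k * poly_of ct k alpha x * omegat alpha x)).
  { unfold K_of. apply RInt_eq. solve_cont. }
  assert (KE : forall i, K_of omega c i k alpha = CI (fun x => x ^ i * poly_of c k alpha x * omega alpha x)).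
  { intros; unfold K_of. apply RInt_eq. solve_cont. }
  rewrite KtE.
  destruct (poly_dec c k alpha (proj1 HcA k)) as [L [HL HLe]].
  destruct (poly_dec ct (S k) alpha (proj1 HctA (S k))) as [L' [HL' HL'e]].
  assert (Hpos := onepos alpha mu Ha Hmu).
  split.
  - set (F := fun x => (1 + alpha * x) * poly_of c k alpha x).
    assert (Hisp : isp (S k) (fun x => F x - alpha * poly_of ct (S k) alpha x)).
    { apply (isp_ext _ (fun x => ((x ^ k + L x) + alpha * (x * L x)) + (- alpha) * L' x)).
      { intros x. unfold F. rewrite HLe, HL'e. simpl. ring. }
      apply isp_plus. apply isp_plus. apply isp_plus. apply isp_pow. apply isp_S; auto.
      apply isp_scal, isp_mulx; auto. apply isp_scal; auto. }
    assert (HF : forall i, CI (fun x => x ^ i * F x * omegat alpha x)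
                          = CI (fun x => x ^ i * poly_of c k alpha x * omega alpha x)).
    { intros i. apply CI_ext. intros x Hx. unfold F. rewrite om_omt; auto. ring. }
    assert (E1 := expand ct alpha k Ha HctA F alpha (K_of omega c k k alpha) Hisp
       ltac:(intros i Hi; rewrite HF; apply lemA; auto)
       ltac:(rewrite HF, KE; reflexivity) mu Hmu).
    unfold Phi_of. rewrite (om_omt alpha mu Ha Hmu).
    transitivity (omegat alpha mu * F mu); [unfold F; ring|]. rewrite E1. ring.
  - assert (Hd : forall j, ex_derive (c k j) alpha).
    { intros j. apply ex_derive_Reals_1. apply Hsc; auto. }
    set (d := fun j => Derive (c k j) alpha).
    assert (dk0 : d k = 0).
    { unfold d. apply is_derive_unique.
      apply (is_derive_ext_loc (fun _ => 1)).
      { apply (filter_imp (fun y => -1 < y < 1)); [|apply loc_int; auto].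
        intros y Hy. rewrite (proj1 (Hc y Hy) k). reflexivity. }
      exact (@is_derive_const R_AbsRing R_NormedModule 1 alpha). }
    set (D := fun x => sum_f_R0 (fun j => d j * x ^ j) k).
    assert (HD : isp k D) by (apply D_isp; auto).
    set (V := fun i => sum_f_R0 (fun j => d j * M (i + j) alpha
                      + c k j alpha * (-4 * CI (fun x => x ^ (S (i + j)) * omegat alpha x))) k).
    assert (KD : forall i, is_derive (fun b => K_of omega c i k b) alpha (V i)).
    { intros i. apply K_der; auto. }
    set (F := fun x => -4 * x * poly_of c k alpha x + (1 + alpha * x) * D x).
    assert (HFV : forall i, CI (fun x => x ^ i * F x * omegat alpha x) = V i).
    { intros i.
      rewrite (CI_ext _ (fun x => x ^ i * D x * omega alpha x
                    + (-4) * (x ^ (S i) * poly_of c k alpha x * omegat alpha x))).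
      2:{ intros x Hx. unfold F. rewrite om_omt; auto. simpl. ring. }
      rewrite CI_plus by solve_cont. rewrite CI_scal by solve_cont.
      unfold D, V. rewrite CI_polysum by auto. unfold poly_of. rewrite CI_polysum by auto.
      rewrite sum_plus. rewrite scal_sum. f_equal. apply sum_eq. intros j Hj.
      simpl. ring. }
    assert (HV0 : forall i, (i < k)%nat -> V i = 0).
    { intros i Hi. rewrite <- (is_derive_unique _ _ _ (KD i)).
      apply is_derive_unique.
      apply (is_derive_ext_loc (fun _ => 0)).
      { apply (filter_imp (fun y => -1 < y < 1)); [|apply loc_int; auto].
        intros y Hy. unfold K_of. assert (Hw := cont_om y Hy).
        rewrite RInt_eq by solve_cont. rewrite lemA; auto. }
      exact (@is_derive_const R_AbsRing R_NormedModule 0 alpha). }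
    assert (Hisp : isp (S k) (fun x => F x - (-4) * poly_of ct (S k) alpha x)).
    { apply (isp_ext _ (fun x => (((-4) * (x * L x) + D x) + alpha * (x * D x)) + 4 * L' x)).
      { intros x. unfold F. rewrite HLe, HL'e. simpl. ring. }
      apply isp_plus. apply isp_plus. apply isp_plus. apply isp_scal, isp_mulx; auto.
      apply isp_S; auto. apply isp_scal, isp_mulx; auto. apply isp_scal; auto. }
    assert (E2 := expand ct alpha k Ha HctA F (-4) (V k) Hisp
       ltac:(intros i Hi; rewrite HFV; apply HV0; auto)
       ltac:(apply HFV) mu Hmu).
    exists (V k). split.
    + apply is_derive_Reals. apply KD.
    + apply is_derive_Reals.
      eapply is_derive_eqv; [|apply Phi_der; auto; lra].
      unfold Phi_of. rewrite (om_omt alpha mu Ha Hmu).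
      transitivity (omegat alpha mu * F mu); [unfold F, D, d; ring|]. rewrite E2. ring.
Qed.
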